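(* Let $n,m$ be positive integers and let $A,B$ be positive real numbers. On the Siegel–Jacobi space $\mathbb{H}_{n,m}=\mathbb{H}_n\times\mathbb{C}^{(m,n)}$, with coordinates $(Z,W)$, $Z=X+iY$, $W=U+iV$ ($X,Y,U,V$ real), the symmetric tensor \begin{align*} ds_{n,m;A,B}^2&= A\,\sigma\big(Y^{-1}dZ\,Y^{-1}d\overline{Z}\big)\\ &\quad+B\,\Big\{\sigma\big(Y^{-1}\,{}^tV\,V\,Y^{-1}dZ\,Y^{-1}d\overline{Z}\big)+\sigma\big(Y^{-1}\,{}^t(dW)\,d\overline{W}\big)\\ &\qquad\quad-\sigma\big(V\,Y^{-1}dZ\,Y^{-1}\,{}^t(d\overline{W})\big)-\sigma\big(V\,Y^{-1}d\overline{Z}\,Y^{-1}\,{}^t(dW)\big)\Big\} \end{align*} is a Riemannian metric on $\mathbb{H}_{n,m}$ which is invariant under the natural action of the Jacobi group $G^J$ on $\mathbb{H}_{n,m}$.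
   Context: $\mathbb{H}_n=\{Z\in\mathbb{C}^{(n,n)}: Z={}^tZ,\ \operatorname{Im}Z>0\}$ is the Siegel upper half space; $\mathbb{C}^{(m,n)}$ denotes complex $m\times n$ matrices; ${}^tM$ is the transpose and $\sigma(M)$ the trace of a square matrix. $dZ=(dz_{\mu\nu})$, $d\overline Z=(d\overline z_{\mu\nu})$, $dW=(dw_{kl})$, $d\overline W=(d\overline w_{kl})$ are matrices of differentials. $Sp(n,\mathbb{R})=\{M\in\mathbb{R}^{(2n,2n)}: {}^tMJ_nM=J_n\}$ with $J_n=\begin{pmatrix}0&E_n\\-E_n&0\end{pmatrix}$, $E_n$ the identity. The Heisenberg group $H^{(n,m)}_{\mathbb{R}}=\{(\lambda,\mu;\kappa):\lambda,\mu\in\mathbb{R}^{(m,n)},\kappa\in\mathbb{R}^{(m,m)},\ \kappa+\mu\,{}^t\lambda\text{ symmetric}\}$ has product $(\lambda,\mu;\kappa)\circ(\lambda',\mu';\kappa')=(\lambda+\lambda',\mu+\mu';\kappa+\kappa'+\lambda\,{}^t\mu'-\mu\,{}^t\lambda')$. The Jacobi group is $G^J=Sp(n,\mathbb{R})\ltimes H^{(n,m)}_{\mathbb{R}}$ with product $(M,(\lambda,\mu;\kappa))\cdot(M',(\lambda',\mu';\kappa'))=(MM',(\tilde\lambda+\lambda',\tilde\mu+\mu';\kappa+\kappa'+\tilde\lambda\,{}^t\mu'-\tilde\mu\,{}^t\lambda'))$ where $(\tilde\lambda,\tilde\mu)=(\lambda,\mu)M'$. Its natural action on $\mathbb{H}_{n,m}$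 is $(M,(\lambda,\mu;\kappa))\cdot(Z,W)=\big((AZ+B)(CZ+D)^{-1},\,(W+\lambda Z+\mu)(CZ+D)^{-1}\big)$ for $M=\begin{pmatrix}A&B\\C&D\end{pmatrix}$ (here $A,B,C,D$ are the $n\times n$ blocks of $M$, unrelated to the positive constants $A,B$ of the metric). *)

(* Defs.v *)
From HB Require Import structures.
From mathcomp Require Import all_boot all_order all_algebra.
From mathcomp Require Import all_classical all_reals all_analysis.
From mathcomp Require Import complex.
Set Implicit Arguments. Unset Strict Implicit. Unset Printing Implicit Defensive.
Import Order.TTheory GRing.Theory Num.Theory.
Import numFieldNormedType.Exports.
Local Open Scope classical_set_scope.
Local Open Scope ring_scope.

Section SiegelJacobi.
Variable R : realType.
Local Notation C := (R[i]).

Definition cmx (p q : nat) (M : 'M[R]_(p, q)) : 'M[C]_(p, q) :=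
  map_mx (fun x : R => (x%:C)%C) M.
Definition Remx (p q : nat) (M : 'M[C]_(p, q)) : 'M[R]_(p, q) := map_mx (@complex.Re R) M.
Definition Immx (p q : nat) (M : 'M[C]_(p, q)) : 'M[R]_(p, q) := map_mx (@complex.Im R) M.
Definition conjmx (p q : nat) (M : 'M[C]_(p, q)) : 'M[C]_(p, q) :=
  map_mx (fun z : C => (z ^*)%C) M.

Definition posdef (n : nat) (Y : 'M[R]_n) : Prop :=
  Y^T = Y /\ forall x : 'cV[R]_n, x != 0 -> 0 < (x^T *m Y *m x) 0 0.

Definition in_Hn (n : nat) (Z : 'M[C]_n) : Prop := Z^T = Z /\ posdef (Immx Z).

Definition in_Hnm (n m : nat) (Z : 'M[C]_n) (W : 'M[C]_(m, n)) : Prop := in_Hn Z.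

(* The symmetric tensor ds^2_{n,m;A,B} evaluated (as a quadratic form) on the
   real tangent vector (dZ, dW) at the point (Z, W); dZbar, dWbar are the
   complex conjugates of dZ, dW. *)
Definition ds2 (n m : nat) (A B : R) (Z : 'M[C]_n) (W : 'M[C]_(m, n))
    (dZ : 'M[C]_n) (dW : 'M[C]_(m, n)) : C :=
  let Yi := invmx (cmx (Immx Z)) in
  let V := cmx (Immx W) in
  let dZb := conjmx dZ in
  let dWb := conjmx dW in
  (A%:C)%C * \tr (Yi *m dZ *m Yi *m dZb)
  + (B%:C)%C * ( \tr (Yi *m V^T *m V *m Yi *m dZ *m Yi *m dZb)
              + \tr (Yi *m dW^T *m dWb)
              - \tr (V *m Yi *m dZ *m Yi *m dWb^T)
              - \tr (V *m Yi *m dZb *m Yi *m dW^T)).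

(* Riemannian: on every real tangent vector (dZ symmetric, dW arbitrary) the
   quadratic form is real, and it is positive on nonzero tangent vectors. *)
Definition is_riemannian_metric (n m : nat)
    (g : 'M[C]_n -> 'M[C]_(m, n) -> 'M[C]_n -> 'M[C]_(m, n) -> C) : Prop :=
  forall Z W, in_Hnm Z W ->
  forall dZ dW, dZ^T = dZ ->
    @complex.Im R (g Z W dZ dW) = 0 /\
    ((dZ, dW) != (0, 0) -> 0 < @complex.Re R (g Z W dZ dW)).

Definition Jmx (n : nat) : 'M[R]_(n + n) := block_mx 0 1%:M (- 1%:M) 0.
Definition in_Sp (n : nat) (M : 'M[R]_(n + n)) : Prop := M^T *m Jmx n *m M = Jmx n.

Definition in_GJ (n m : nat) (M : 'M[R]_(n + n)) (la mu : 'M[R]_(m, n))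
    (ka : 'M[R]_m) : Prop :=
  in_Sp M /\ (ka + mu *m la^T)^T = ka + mu *m la^T.

Definition actZ (n : nat) (M : 'M[R]_(n + n)) (Z : 'M[C]_n) : 'M[C]_n :=
  (cmx (ulsubmx M) *m Z + cmx (ursubmx M))
    *m invmx (cmx (dlsubmx M) *m Z + cmx (drsubmx M)).
Definition actW (n m : nat) (M : 'M[R]_(n + n)) (la mu : 'M[R]_(m, n))
    (Z : 'M[C]_n) (W : 'M[C]_(m, n)) : 'M[C]_(m, n) :=
  (W + cmx la *m Z + cmx mu)
    *m invmx (cmx (dlsubmx M) *m Z + cmx (drsubmx M)).

Definition cvg0C (f : R -> C) (l : C) : Prop :=
  (@complex.Re R (f t) @[t --> (0 : R)^'] --> (@complex.Re R l : R)) /\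
  (@complex.Im R (f t) @[t --> (0 : R)^'] --> (@complex.Im R l : R)).

Definition mx_deriv0 (p q : nat) (c : R -> 'M[C]_(p, q)) (D : 'M[C]_(p, q)) : Prop :=
  forall i j, cvg0C (fun t => (c t i j - c 0 i j) / (t%:C)%C) (D i j).

(* The differential of the action at
   (Z, W) applied to (dZ, dW) is the derivative at t = 0 of
   t |-> g.(Z + t dZ, W + t dW). *)
Definition GJ_invariant (n m : nat)
    (g : 'M[C]_n -> 'M[C]_(m, n) -> 'M[C]_n -> 'M[C]_(m, n) -> C) : Prop :=
  forall (M : 'M[R]_(n + n)) (la mu : 'M[R]_(m, n)) (ka : 'M[R]_m),
  in_GJ M la mu ka ->
  forall Z W, in_Hnm Z W ->
  forall dZ dW, dZ^T = dZ ->
  forall dZ' dW',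
    mx_deriv0 (fun t : R => actZ M (Z + (t%:C)%C *: dZ)) dZ' ->
    mx_deriv0 (fun t : R => actW M la mu (Z + (t%:C)%C *: dZ) (W + (t%:C)%C *: dW)) dW' ->
    g (actZ M Z) (actW M la mu Z W) dZ' dW' = g Z W dZ dW.

End SiegelJacobi.

(* Main.v *)
Require Import Defs.
From HB Require Import structures.
From mathcomp Require Import all_boot all_order all_algebra.
From mathcomp Require Import all_classical all_reals all_analysis.
From mathcomp Require Import complex.
Import Order.TTheory GRing.Theory Num.Theory.
Import numFieldNormedType.Exports.
Local Open Scope ring_scope.
From mathcomp Require Import ring lra.
Set Implicit Arguments. Unset Strict Implicit. Unset Printing Implicit Defensive.
Section Alg.
Variable R : realType.
Local Notation C := (R[i]).
Local Notation cj := (@Defs.conjmx R _ _).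
Local Notation cmx := (@Defs.cmx R _ _).
Local Notation Imx := (@Defs.Immx R _ _).

Lemma cmxE p q (M : 'M[R]_(p,q)) : cmx M = map_mx (real_complex R) M.
Proof. by []. Qed.
Lemma cjE p q (M : 'M[C]_(p,q)) : cj M = map_mx (@conjc R) M.
Proof. by []. Qed.

Lemma cmxM p q r (A : 'M[R]_(p,q)) (B : 'M[R]_(q,r)) : cmx (A *m B) = cmx A *m cmx B.
Proof. by rewrite !cmxE map_mxM. Qed.
Lemma cmxD p q (A B : 'M[R]_(p,q)) : cmx (A + B) = cmx A + cmx B.
Proof. by rewrite !cmxE map_mxD. Qed.
Lemma cmxN p q (A : 'M[R]_(p,q)) : cmx (- A) = - cmx A.
Proof. by rewrite !cmxE map_mxN. Qed.
Lemma cmxB p q (A B : 'M[R]_(p,q)) : cmx (A - B) = cmx A - cmx B.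
Proof. by rewrite !cmxE map_mxB. Qed.
Lemma cmx_tr p q (A : 'M[R]_(p,q)) : cmx (A^T) = (cmx A)^T.
Proof. by rewrite !cmxE map_trmx. Qed.
Lemma cmx1 p : cmx (1%:M : 'M[R]_p) = 1%:M.
Proof. by rewrite !cmxE map_mx1. Qed.
Lemma cmx0 p q : cmx (0 : 'M[R]_(p,q)) = 0.
Proof. by rewrite !cmxE map_mx0. Qed.

Lemma cjM p q r (A : 'M[C]_(p,q)) (B : 'M[C]_(q,r)) : cj (A *m B) = cj A *m cj B.
Proof. by rewrite !cjE map_mxM. Qed.
Lemma cjD p q (A B : 'M[C]_(p,q)) : cj (A + B) = cj A + cj B.
Proof. by rewrite !cjE map_mxD. Qed.
Lemma cjN p q (A : 'M[C]_(p,q)) : cj (- A) = - cj A.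
Proof. by rewrite !cjE map_mxN. Qed.
Lemma cjB p q (A B : 'M[C]_(p,q)) : cj (A - B) = cj A - cj B.
Proof. by rewrite !cjE map_mxB. Qed.
Lemma cj_tr p q (A : 'M[C]_(p,q)) : cj (A^T) = (cj A)^T.
Proof. by rewrite !cjE map_trmx. Qed.
Lemma cjK p q (A : 'M[C]_(p,q)) : cj (cj A) = A.
Proof. by apply/matrixP => i j; rewrite !mxE conjcK. Qed.
Lemma cj_cmx p q (A : 'M[R]_(p,q)) : cj (cmx A) = cmx A.
Proof. by apply/matrixP => i j; rewrite !mxE conjc_real. Qed.
Lemma cjZ p q k (A : 'M[C]_(p,q)) : cj (k *: A) = (k^*)%C *: cj A.
Proof. by apply/matrixP => i j; rewrite !mxE rmorphM. Qed.
Lemma cj_inv p (A : 'M[C]_p) : cj (invmx A) = invmx (cj A).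
Proof. by rewrite !cjE map_invmx. Qed.
Lemma cj_unit p (A : 'M[C]_p) : (cj A \in unitmx) = (A \in unitmx).
Proof. by rewrite !cjE map_unitmx. Qed.
Lemma cmx_inv p (A : 'M[R]_p) : cmx (invmx A) = invmx (cmx A).
Proof. by rewrite !cmxE map_invmx. Qed.
Lemma cmx_unit p (A : 'M[R]_p) : (cmx A \in unitmx) = (A \in unitmx).
Proof. by rewrite !cmxE map_unitmx. Qed.
Lemma Imx_tr p q (A : 'M[C]_(p,q)) : Imx (A^T) = (Imx A)^T.
Proof. by apply/matrixP => i j; rewrite !mxE. Qed.

Definition ii : C := 2%:R * 'i%C.
Lemma ii_neq0 : ii != 0.
Proof. rewrite /ii mulf_neq0 //.
by apply/eqP => /(congr1 (@complex.Im R)) /= /eqP; rewrite oner_eq0. Qed.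

Lemma ImE p q (X : 'M[C]_(p,q)) : X - cj X = ii *: cmx (Imx X).
Proof.
apply/matrixP => i j; rewrite !mxE subcJ /ii.
by rewrite mulrAC.
Qed.
End Alg.
Section Sp.
Variable R : realType.
Lemma Sp_rel n (M : 'M[R]_(n+n)) : in_Sp M ->
  (ulsubmx M)^T *m dlsubmx M = (dlsubmx M)^T *m ulsubmx M /\
  (ursubmx M)^T *m drsubmx M = (drsubmx M)^T *m ursubmx M /\
  (ulsubmx M)^T *m drsubmx M - (dlsubmx M)^T *m ursubmx M = 1%:M.
Proof.
rewrite /in_Sp /Jmx.
set a := ulsubmx M; set b := ursubmx M; set c := dlsubmx M; set d := drsubmx M.
have -> : M = block_mx a b c d by rewrite submxK.
rewrite tr_block_mx !mulmx_block !mulmx0 !mulmx1 !mulmxN !mulmx1 !addr0 !add0r.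
rewrite ?mulNmx ?mul0mx ?addr0 ?add0r.
move/eq_block_mx => [h1 h2 h3 h4].
split; first by apply/eqP; rewrite -subr_eq0 addrC h1.
split; first by apply/eqP; rewrite -subr_eq0 addrC h4.
by rewrite addrC h2.
Qed.
End Sp.
Lemma trD (K : nmodType) p q (A B : 'M[K]_(p,q)) : (A + B)^T = A^T + B^T.
Proof. by apply/matrixP => i j; rewrite !mxE. Qed.
Lemma trN (K : zmodType) p q (A : 'M[K]_(p,q)) : (- A)^T = - A^T.
Proof. by apply/matrixP => i j; rewrite !mxE. Qed.
Lemma trB (K : zmodType) p q (A B : 'M[K]_(p,q)) : (A - B)^T = A^T - B^T.
Proof. by rewrite trD trN. Qed.
Lemma trZ (K : pzRingType) p q k (A : 'M[K]_(p,q)) : (k *: A)^T = k *: A^T.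
Proof. by apply/matrixP => i j; rewrite !mxE. Qed.
Lemma inv_uniq (K : comUnitRingType) p (A B : 'M[K]_p) : A *m B = 1%:M -> invmx A = B.
Proof.
move=> h; have [uA uB] := mulmx1_unit h.
by rewrite -[invmx A]mulmx1 -h mulmxA mulVmx // mul1mx.
Qed.

Section Key.
Variable K : comUnitRingType.
Variable n : nat.
Variables a b c d : 'M[K]_n.
Hypothesis S1 : a^T *m c = c^T *m a.
Hypothesis S2 : b^T *m d = d^T *m b.
Hypothesis S3 : a^T *m d - c^T *m b = 1%:M.

Lemma key (Z1 Z2 : 'M[K]_n) : Z1^T = Z1 ->
  (c *m Z1 + d)^T *m (a *m Z2 + b) - (a *m Z1 + b)^T *m (c *m Z2 + d) = Z2 - Z1.
Proof.
move=> s1.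
rewrite !trD !trmx_mul s1 !mulmxDl -!mulmxA opprD addrACA -mulmxBr.
have -> : c^T *m (a *m Z2 + b) - a^T *m (c *m Z2 + d) = - 1%:M.
  rewrite !mulmxDr !mulmxA S1 opprD addrACA subrr add0r.
  by rewrite -S3 opprB.
have -> : d^T *m (a *m Z2 + b) - b^T *m (c *m Z2 + d) = Z2.
  rewrite !mulmxDr !mulmxA S2 opprD addrACA subrr addr0 -mulmxBl.
  have -> : d^T *m a - b^T *m c = 1%:M by rewrite -[1%:M]trmx1 -S3 trB !trmx_mul !trmxK.
  by rewrite mul1mx.
by rewrite mulmxN mulmx1 addrC.
Qed.

Lemma keyPa (Z : 'M[K]_n) : Z^T = Z ->
  (c *m Z + d)^T *m a - (a *m Z + b)^T *m c = 1%:M.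
Proof.
move=> s; rewrite !trD !trmx_mul s !mulmxDl -!mulmxA S1 opprD addrACA subrr add0r.
by rewrite -[1%:M]trmx1 -S3 trB !trmx_mul !trmxK.
Qed.
End Key.
Section Pos.
Variable R : realType.
Local Notation C := (R[i]).
Local Notation cj := (@Defs.conjmx R _ _).
Local Notation cmx := (@Defs.cmx R _ _).
Local Notation Imx := (@Defs.Immx R _ _).
Local Notation Rmx := (@Defs.Remx R _ _).

Lemma ReSum (I : finType) (F : I -> C) :
  complex.Re (\sum_i F i) = \sum_i complex.Re (F i).
Proof. by apply: (big_morph _ (fun x y => _) (erefl _)) => [[? ?] [? ?]]. Qed.
Lemma ImSum (I : finType) (F : I -> C) :
  complex.Im (\sum_i F i) = \sum_i complex.Im (F i).
Proof. by apply: (big_morph _ (fun x y => _) (erefl _)) => [[? ?] [? ?]]. Qed.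

Lemma quadE n (Y : 'M[R]_n) (x : 'rV[C]_n) :
  complex.Re ((x *m cmx Y *m (cj x)^T) 0 0) =
  ((Rmx x)^T^T *m Y *m (Rmx x)^T) 0 0 + ((Imx x)^T^T *m Y *m (Imx x)^T) 0 0.
Proof.
rewrite !mxE (ReSum (fun j => _)) -big_split /=; apply: eq_bigr => k _.
rewrite !mxE !mulr_suml (ReSum (fun j => _)) -big_split /=; apply: eq_bigr => j _.
rewrite !mxE; case: (x 0 j) => a1 b1; case: (x 0 k) => a2 b2 /=.
ring.
Qed.

Lemma psd n (Y : 'M[R]_n) (z : 'cV[R]_n) : posdef Y -> 0 <= (z^T *m Y *m z) 0 0.
Proof.
move=> [_ hY]; have [->|nz] := eqVneq z 0; first by rewrite mulmx0 mxE.
exact/ltW/hY.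
Qed.

Lemma posC n (Y : 'M[R]_n) (x : 'rV[C]_n) : posdef Y -> x != 0 ->
  0 < complex.Re ((x *m cmx Y *m (cj x)^T) 0 0).
Proof.
move=> hY nx; rewrite quadE.
have [hu|hu] := eqVneq (Rmx x)^T 0.
  have [hv|hv] := eqVneq (Imx x)^T 0.
    exfalso; move/negP: nx; apply; apply/eqP/matrixP => i j.
    move/matrixP: hu => /(_ j i); move/matrixP: hv => /(_ j i).
    rewrite !mxE; case: (x i j) => ? ? /= -> ->; by [].
  by rewrite hu mulmx0 mxE add0r; case: hY => _ ->.
by rewrite ltr_pwDl ?psd //; case: hY => _ ->.
Qed.

Lemma posdef_unit n (Y : 'M[R]_n) : posdef Y -> Y \in unitmx.
Proof.
move=> hY; rewrite unitmxE unitfE; apply/negP => /det0P [v nv hv].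
have : 0 < (v^T^T *m Y *m v^T) 0 0.
  by case: hY => _ -> //; rewrite trmx_eq0.
by rewrite trmxK hv mul0mx mxE ltxx.
Qed.

Lemma P_unit n (Y : 'M[R]_n) (P Q : 'M[C]_n) : posdef Y ->
  (cj P)^T *m Q - (cj Q)^T *m P = ii R *: cmx Y -> P \in unitmx.
Proof.
move=> hY hK; rewrite unitmxE unitfE -det_tr; apply/negP => /det0P [v nv hv].
set r := cj v.
have h1 : r *m (cj P)^T = 0 by rewrite /r -cj_tr -cjM hv /Defs.conjmx map_mx0.
have h2 : P *m (cj r)^T = 0 by rewrite /r cjK -[P]trmxK -trmx_mul hv trmx0.
have nr : r != 0.
  by apply: contra nv => /eqP h; rewrite -[v]cjK -/r h /Defs.conjmx map_mx0.
have := posC hY nr.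
have : r *m ((cj P)^T *m Q - (cj Q)^T *m P) *m (cj r)^T = 0.
  by rewrite mulmxBr mulmxBl !mulmxA h1 -!mulmxA h2 !mulmx0 mul0mx subrr.
rewrite hK -scalemxAr -scalemxAl => /matrixP /(_ 0 0); rewrite !mxE.
move/eqP; rewrite mulf_eq0 (negbTE (ii_neq0 R)) /= => /eqP ->.
by rewrite ltxx.
Qed.
End Pos.
Lemma ACgen (K : comRingType) (a b c d b' c' d' : K) :
  b' = b -> c' = c -> d' = d -> d + a - c - b = a - c' + (- b' - - d').
Proof. by move=> -> -> ->; ring. Qed.
Section Form.
Local Opaque mulmx trmx mxtrace.
Variable R : realType.
Local Notation C := (R[i]).

Lemma Bpart n m (Yi dZ dZb : 'M[C]_n) (V dW dWb : 'M[C]_(m,n)) :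
  Yi^T = Yi -> dZ^T = dZ -> dZb^T = dZb ->
  \tr (Yi *m V^T *m V *m Yi *m dZ *m Yi *m dZb) + \tr (Yi *m dW^T *m dWb)
  - \tr (V *m Yi *m dZ *m Yi *m dWb^T) - \tr (V *m Yi *m dZb *m Yi *m dW^T)
  = \tr (Yi *m (dW - V *m Yi *m dZ)^T *m (dWb - V *m Yi *m dZb)).
Proof.
move=> sY sZ sZb.
rewrite trB !trmx_mul sY sZ !mulmxBr !mulmxBl !raddfB /= !mulmxA.
have e2 : \tr (Yi *m dW^T *m V *m Yi *m dZb) = \tr (V *m Yi *m dZb *m Yi *m dW^T).
  have -> : Yi *m dW^T *m V *m Yi *m dZb = (Yi *m dW^T) *m (V *m Yi *m dZb) by rewrite !mulmxA.
  by rewrite (mxtrace_mulC (Yi *m dW^T)) !mulmxA.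
have e3 : \tr (Yi *m dZ *m Yi *m V^T *m dWb) = \tr (V *m Yi *m dZ *m Yi *m dWb^T).
  rewrite -[X in _ = X]mxtrace_tr !trmx_mul trmxK sY sZ.
  by rewrite (mxtrace_mulC (Yi *m dZ *m Yi *m V^T)) !mulmxA.
have e4 : \tr (Yi *m dZ *m Yi *m V^T *m V *m Yi *m dZb) =
          \tr (Yi *m V^T *m V *m Yi *m dZ *m Yi *m dZb).
  rewrite -[X in _ = X]mxtrace_tr !trmx_mul !trmxK sY sZ sZb.
  by rewrite (mxtrace_mulC (Yi *m dZ *m Yi *m V^T *m V *m Yi)) !mulmxA.
move: e2 e3 e4; apply: ACgen.
Qed.
End Form.
Section Riem.
Variable R : realType.
Local Notation C := (R[i]).
Local Notation cj := (@Defs.conjmx R _ _).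
Local Notation cmx := (@Defs.cmx R _ _).
Local Notation Imx := (@Defs.Immx R _ _).
Local Open Scope sesquilinear_scope.

Lemma cjT p q (M : 'M[C]_(p,q)) : (cj M)^T = M ^t*.
Proof. by rewrite map_trmx. Qed.

Lemma posdef_inv n (Y : 'M[R]_n) : posdef Y -> posdef (invmx Y).
Proof.
move=> hY; have uY := posdef_unit hY; case: hY => sY hY; split.
  by rewrite trmx_inv sY.
move=> x nx; have nx' : invmx Y *m x != 0.
  by apply: contra nx => /eqP h; rewrite -[x](mulKVmx uY) h mulmx0.
have := hY _ nx'; rewrite trmx_mul trmx_inv sY.
by rewrite -!mulmxA (mulKVmx uY).
Qed.

Lemma factor n (Yr : 'M[R]_n) : posdef Yr ->
  exists2 M : 'M[C]_n, M \in unitmx & cmx Yr = (cj M)^T *m M.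
Proof.
move=> hY; set Yc := cmx Yr.
have herm : Yc \is hermsymmx.
  apply/is_hermitianmxP; rewrite expr0 scale1r -map_trmx.
  case: hY => sY _; rewrite /Yc; have -> : (cmx Yr ^ Num.conj) = cj (cmx Yr) by [].
  by rewrite cj_cmx -cmx_tr sY.
have /orthomx_spectralP hYc := hermitian_normalmx herm.
set U := spectralmx Yc in hYc; set d := spectral_diag Yc in hYc.
have uU : U \is unitarymx by apply: spectral_unitarymx.
have uU' := unitarymx_unit uU.
have dreal : d \is a realmx by apply: hermitian_spectral_diag_real.
have UU : U *m U^t* = 1%:M by apply/unitarymxP.
have hd : U *m Yc *m U^t* = diag_mx d.
  by rewrite hYc !mulmxA (mulmxV uU') mul1mx -mulmxA UU mulmx1.
have dpos : forall i, 0 < complex.Re (d 0 i).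
  move=> i; have -> : d 0 i = (U *m Yc *m U^t*) i i by rewrite hd mxE eqxx mulr1n.
  have -> : (U *m Yc *m U^t*) i i = (row i U *m Yc *m (cj (row i U))^T) 0 0.
    rewrite !mxE; apply: eq_bigr => k _; rewrite !mxE; congr (_ * _).
    by apply: eq_bigr => j _; rewrite !mxE.
  apply: posC hY _; apply/negP => /eqP h0.
  have := congr1 (row i) UU; rewrite row_mul h0 mul0mx => /rowP /(_ i).
  by rewrite !mxE eqxx /= => /eqP; rewrite eq_sym oner_eq0.
have dR : forall i, d 0 i = ((complex.Re (d 0 i))%:C)%C.
  move=> i; have /mxOverP /(_ 0 i) := dreal.
  by case: (d 0 i) => a b; rewrite complex_real /= => /eqP ->.
set s := \row_i (((Num.sqrt (complex.Re (d 0 i)))%:C)%C : C).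
exists (diag_mx s *m U).
  rewrite unitmx_mul uU' andbT unitmxE unitfE det_diag.
  rewrite prodf_seq_neq0; apply/allP => i _ /=; rewrite mxE.
  apply/eqP => /(congr1 (@complex.Re R)) /= /eqP.
  by rewrite sqrtr_eq0 leNgt dpos.
rewrite cjM trmx_mul [(cj U)^T]cjT -invmx_unitary // hYc !mulmxA.
congr (_ *m _); rewrite -mulmxA; congr (_ *m _).
rewrite cjE map_diag_mx tr_diag_mx mulmx_diag; congr diag_mx; apply/rowP => i.
rewrite !mxE; set r := Num.sqrt _.
rewrite [X in _ = X * _](_ : _ = (r%:C)%C); last first.
  by apply/eqP; rewrite eq_complex /= oppr0 !eqxx.
rewrite -rmorphM /= -expr2 /r sqr_sqrtr; first by rewrite -dR.
exact/ltW/dpos.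
Qed.
End Riem.
Section Riem2.
Variable R : realType.
Local Notation C := (R[i]).
Local Notation cj := (@Defs.conjmx R _ _).
Local Notation cmx := (@Defs.cmx R _ _).
Local Notation Imx := (@Defs.Immx R _ _).

Lemma trKK p q (K : 'M[C]_(p,q)) :
  [/\ complex.Im (\tr (K *m (cj K)^T)) = 0, 0 <= complex.Re (\tr (K *m (cj K)^T))
    & (K != 0 -> 0 < complex.Re (\tr (K *m (cj K)^T)))].
Proof.
set f := fun i j => complex.Re (K i j) ^+ 2 + complex.Im (K i j) ^+ 2.
have f0 : forall i j, 0 <= f i j by move=> i j; rewrite /f addr_ge0 // sqr_ge0.
have hRe : complex.Re (\tr (K *m (cj K)^T)) = \sum_i \sum_j f i j.
  rewrite /mxtrace (ReSum (fun i => _)); apply: eq_bigr => i _.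
  rewrite !mxE (ReSum (fun j => _)); apply: eq_bigr => j _.
  by rewrite !mxE /f; case: (K i j) => a b /=; ring.
have hIm : complex.Im (\tr (K *m (cj K)^T)) = 0.
  rewrite /mxtrace (ImSum (fun i => _)) big1 // => i _.
  rewrite !mxE (ImSum (fun j => _)) big1 // => j _.
  by rewrite !mxE; case: (K i j) => a b /=; ring.
split => //; first by rewrite hRe; apply: sumr_ge0 => i _; apply: sumr_ge0.
move=> nK; rewrite hRe.
have [i [j hij]] : exists i j, K i j != 0.
  apply/not_existsP => hn; move/eqP: nK; apply; apply/matrixP => i j.
  rewrite mxE; apply/eqP; apply: contra_notT (hn i) => hij; by exists j.
rewrite (bigD1 i) //= (bigD1 j) //= -addrA ltr_pwDl //.
  rewrite /f; move: hij; case: (K i j) => a b /= hab.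
  have : (a != 0) || (b != 0) by apply: contraR hab; rewrite negb_or !negbK => /andP[/eqP -> /eqP ->].
  case/orP => h.
    by rewrite ltr_pwDl ?sqr_ge0 // lt_def sqr_ge0 sqrf_eq0 h.
  by rewrite ltr_pwDr ?sqr_ge0 // lt_def sqr_ge0 sqrf_eq0 h.
rewrite addr_ge0 //; apply: sumr_ge0 => k _ //; apply: sumr_ge0 => *; apply: f0.
Qed.
End Riem2.
Section Riem3.
Variable R : realType.
Local Notation C := (R[i]).
Local Notation cj := (@Defs.conjmx R _ _).
Local Notation cmx := (@Defs.cmx R _ _).
Local Notation Imx := (@Defs.Immx R _ _).

Definition Fm (A B : R) n m (Yi H Hb : 'M[C]_n) (O Ob : 'M[C]_(m,n)) : C :=
  (A%:C)%C * \tr (Yi *m H *m Yi *m Hb) + (B%:C)%C * \tr (Yi *m O^T *m Ob).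

Lemma ds2E n m (A B : R) (Z : 'M[C]_n) (W : 'M[C]_(m,n)) dZ dW :
  (invmx (cmx (Imx Z)))^T = invmx (cmx (Imx Z)) -> dZ^T = dZ ->
  ds2 A B Z W dZ dW = Fm A B (invmx (cmx (Imx Z))) dZ (cj dZ)
    (dW - cmx (Imx W) *m invmx (cmx (Imx Z)) *m dZ)
    (cj dW - cmx (Imx W) *m invmx (cmx (Imx Z)) *m cj dZ).
Proof.
by move=> sY sdZ; rewrite /ds2 /Fm Bpart // -cj_tr sdZ.
Qed.

Lemma ReMc (a : R) (z : C) : complex.Re ((a%:C)%C * z) = a * complex.Re z.
Proof. by case: z => x y /=; ring. Qed.
Lemma ImMc (a : R) (z : C) : complex.Im ((a%:C)%C * z) = a * complex.Im z.
Proof. by case: z => x y /=; ring. Qed.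

Lemma pos1 (A B x y : R) : 0 < A -> 0 < B -> 0 <= x -> 0 < y -> 0 < A * x + B * y.
Proof.
by move=> hA hB hx hy; apply: ltr_wpDl; [apply: mulr_ge0 => //; apply: ltW | apply: mulr_gt0].
Qed.
Lemma pos2 (A B x y : R) : 0 < A -> 0 < B -> 0 < x -> 0 <= y -> 0 < A * x + B * y.
Proof.
by move=> hA hB hx hy; apply: ltr_wpDr; [apply: mulr_ge0 => //; apply: ltW | apply: mulr_gt0].
Qed.

Lemma riem n m (A B : R) : 0 < A -> 0 < B -> is_riemannian_metric (@ds2 R n m A B).
Proof.
move=> hA hB Z W [sZ hY] dZ dW sdZ.
have sY : (invmx (cmx (Imx Z)))^T = invmx (cmx (Imx Z)).
  by rewrite trmx_inv -cmx_tr -Imx_tr sZ.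
rewrite ds2E //.
set Yi := invmx (cmx (Imx Z)) in sY *.
set V := cmx (Imx W).
have [M uM hM] := factor (posdef_inv hY).
rewrite cmx_inv -/Yi in hM.
set N := (cj M)^T in hM.
have cjYi : cj Yi = Yi by rewrite /Yi cj_inv cj_cmx.
set O := dW - V *m Yi *m dZ.
have cjO : cj O = cj dW - V *m Yi *m cj dZ by rewrite /O cjB !cjM cjYi /V cj_cmx.
rewrite -cjO /Fm.
have cjN : cj N = M^T by rewrite /N -cj_tr cjK.
have e1 : \tr (Yi *m dZ *m Yi *m cj dZ) =
          \tr ((M *m dZ *m N) *m (cj (M *m dZ *m N))^T).
  rewrite !cjM cjN !trmx_mul trmxK -cj_tr sdZ -/N hM.
  have -> : N *m M *m dZ *m (N *m M) *m cj dZ = N *m (M *m dZ *m N *m M *m cj dZ).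
    by rewrite !mulmxA.
  by rewrite mxtrace_mulC !mulmxA.
have e2 : \tr (Yi *m O^T *m cj O) = \tr ((M *m O^T) *m (cj (M *m O^T))^T).
  rewrite !cjM !trmx_mul -cj_tr trmxK -/N hM.
  by rewrite -!mulmxA mxtrace_mulC !mulmxA.
rewrite e1 e2.
case: (trKK (M *m dZ *m N)) => i1 r1 p1.
case: (trKK (M *m O^T)) => i2 r2 p2.
split; first by rewrite raddfD /= !ImMc i1 i2 !mulr0 addr0.
move=> nz; rewrite raddfD /= !ReMc.
have uN : N \in unitmx by rewrite /N unitmx_tr cj_unit.
have [dZ0|dZn0] := eqVneq dZ 0.
  have nW : dW != 0 by move: nz; rewrite dZ0 xpair_eqE eqxx /=.
  have nL : M *m O^T != 0.
    apply: contra nW => /eqP h; rewrite /O dZ0 mulmx0 subr0 in h.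
    by rewrite -trmx_eq0 -(mulKmx uM (dW^T)) h mulmx0.
  exact: (pos1 hA hB r1 (p2 nL)).
have nK : M *m dZ *m N != 0.
  apply: contra dZn0 => /eqP h.
  by rewrite -(mulKmx uM dZ) -(mulmxK uN (M *m dZ)) h mul0mx mulmx0.
exact: (pos2 hA hB (p1 nK) r2).
Qed.
End Riem3.
Section Lim.
Variable R : realType.
Local Notation C := (R[i]).
Local Open Scope classical_set_scope.

Lemma ReD (x y : C) : complex.Re (x + y) = complex.Re x + complex.Re y.
Proof. by case: x; case: y. Qed.
Lemma ImD (x y : C) : complex.Im (x + y) = complex.Im x + complex.Im y.
Proof. by case: x; case: y. Qed.
Lemma ReMul (x y : C) : complex.Re (x * y) = complex.Re x * complex.Re y - complex.Im x * complex.Im y.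
Proof. by case: x; case: y. Qed.
Lemma ImMul (x y : C) : complex.Im (x * y) = complex.Re x * complex.Im y + complex.Im x * complex.Re y.
Proof. by case: x => a b; case: y => c d /=; ring. Qed.

Lemma cvg0C_cst (c : C) : cvg0C (fun _ : R => c) c.
Proof. by split; apply: cvg_cst. Qed.

Lemma cvg0C_t : cvg0C (fun t : R => (t%:C)%C) 0.
Proof.
split => /=; last by apply: cvg_cst.
exact: nbhs_dnbhs.
Qed.

Lemma cvg0C_add (f g : R -> C) a b : cvg0C f a -> cvg0C g b ->
  cvg0C (fun t => f t + g t) (a + b).
Proof.
move=> [hf1 hf2] [hg1 hg2]; split.
  have -> : (fun t => complex.Re (f t + g t)) = (fun t => complex.Re (f t)) + (fun t => complex.Re (g t)).
    by apply/funext => t; rewrite ReD.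
  by rewrite ReD; apply: cvgD.
have -> : (fun t => complex.Im (f t + g t)) = (fun t => complex.Im (f t)) + (fun t => complex.Im (g t)).
  by apply/funext => t; rewrite ImD.
by rewrite ImD; apply: cvgD.
Qed.

Lemma cvg0C_mul (f g : R -> C) a b : cvg0C f a -> cvg0C g b ->
  cvg0C (fun t => f t * g t) (a * b).
Proof.
move=> [hf1 hf2] [hg1 hg2]; split.
  have -> : (fun t => complex.Re (f t * g t)) =
    (fun t => complex.Re (f t)) \* (fun t => complex.Re (g t)) -
    (fun t => complex.Im (f t)) \* (fun t => complex.Im (g t)).
    by apply/funext => t; rewrite ReMul.
  by rewrite ReMul; apply: cvgB; apply: cvgM.
have -> : (fun t => complex.Im (f t * g t)) =
    (fun t => complex.Re (f t)) \* (fun t => complex.Im (g t)) +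
    (fun t => complex.Im (f t)) \* (fun t => complex.Re (g t)).
  by apply/funext => t; rewrite ImMul.
by rewrite ImMul; apply: cvgD; apply: cvgM.
Qed.

Lemma cvg0C_sum (I : Type) (r : seq I) (Fs : I -> R -> C) (L : I -> C) :
  (forall i, cvg0C (Fs i) (L i)) ->
  cvg0C (fun t => \sum_(i <- r) Fs i t) (\sum_(i <- r) L i).
Proof.
move=> h; elim: r => [|x r IH].
  rewrite big_nil; have -> : (fun t => \sum_(i <- [::]) Fs i t) = (fun _ => 0).
    by apply/funext => t; rewrite big_nil.
  exact: cvg0C_cst.
rewrite big_cons; have -> : (fun t => \sum_(i <- x :: r) Fs i t) =
   (fun t => Fs x t + \sum_(i <- r) Fs i t).
  by apply/funext => t; rewrite big_cons.
exact: cvg0C_add.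
Qed.

Lemma cvg0C_prod (I : Type) (r : seq I) (Fs : I -> R -> C) (L : I -> C) :
  (forall i, cvg0C (Fs i) (L i)) ->
  cvg0C (fun t => \prod_(i <- r) Fs i t) (\prod_(i <- r) L i).
Proof.
move=> h; elim: r => [|x r IH].
  rewrite big_nil; have -> : (fun t => \prod_(i <- [::]) Fs i t) = (fun _ => 1).
    by apply/funext => t; rewrite big_nil.
  exact: cvg0C_cst.
rewrite big_cons; have -> : (fun t => \prod_(i <- x :: r) Fs i t) =
   (fun t => Fs x t * \prod_(i <- r) Fs i t).
  by apply/funext => t; rewrite big_cons.
exact: cvg0C_mul.
Qed.

Lemma cvg0C_near (f g : R -> C) l : (\forall t \near (0:R)^', f t = g t) ->
  cvg0C f l -> cvg0C g l.
Proof.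
move=> hn [h1 h2]; split.
  apply: cvg_trans h1; apply: near_eq_cvg.
  by apply: filterS hn => t /= ->.
apply: cvg_trans h2; apply: near_eq_cvg.
by apply: filterS hn => t /= ->.
Qed.

Lemma cvg0C_uniq (f : R -> C) l1 l2 : cvg0C f l1 -> cvg0C f l2 -> l1 = l2.
Proof.
move=> [h1 h2] [h3 h4].
have e1 : complex.Re l1 = complex.Re l2.
  by rewrite -(cvg_lim (@Rhausdorff R) h1); apply: cvg_lim.
have e2 : complex.Im l1 = complex.Im l2.
  by rewrite -(cvg_lim (@Rhausdorff R) h2); apply: cvg_lim.
by clear h1 h2 h3 h4; move: e1 e2; case: l1; case: l2 => /= ? ? ? ? -> ->.
Qed.

Lemma cvg0C_neq0 (f : R -> C) l : cvg0C f l -> l != 0 ->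
  \forall t \near (0:R)^', f t != 0.
Proof.
move=> [h1 h2] nl.
have [hr|hr] := eqVneq (complex.Re l) 0.
  have hi : complex.Im l != 0.
    by apply: contra nl => /eqP hi; clear h1 h2; move: hr hi; case: l => a b /= -> ->.
  near=> t.
  have : complex.Im (f t) != 0 by near: t; exact: (cvgr_neq0 _ h2 hi).
  by apply: contra => /eqP ->.
near=> t.
have : complex.Re (f t) != 0 by near: t; exact: (cvgr_neq0 _ h1 hr).
by apply: contra => /eqP ->.
Unshelve. all: end_near.
Qed.
End Lim.
Section Deriv.
Variable R : realType.
Local Notation C := (R[i]).
Local Open Scope classical_set_scope.

Definition mcvg p q (F : R -> 'M[C]_(p,q)) (L : 'M[C]_(p,q)) :=
  forall i j, cvg0C (fun t => F t i j) (L i j).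

Lemma mcvg_mul p q r (F : R -> 'M[C]_(p,q)) (G : R -> 'M[C]_(q,r)) L1 L2 :
  mcvg F L1 -> mcvg G L2 -> mcvg (fun t => F t *m G t) (L1 *m L2).
Proof.
move=> h1 h2 i j.
have -> : (fun t => (F t *m G t) i j) = (fun t => \sum_k F t i k * G t k j).
  by apply/funext => t; rewrite mxE.
rewrite mxE; apply: cvg0C_sum => k; exact: cvg0C_mul.
Qed.

Lemma mcvg_det n (F : R -> 'M[C]_n) L : mcvg F L ->
  cvg0C (fun t => \det (F t)) (\det L).
Proof.
move=> h; rewrite /determinant.
apply: cvg0C_sum => s; apply: cvg0C_mul; first exact: cvg0C_cst.
by apply: cvg0C_prod => i; apply: h.
Qed.

Lemma c0 : ((0:R)%:C)%C = 0 :> C. Proof. by []. Qed.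

Lemma mcvg_lin p q (P K : 'M[C]_(p,q)) : mcvg (fun t => P + ((t%:C)%C : C) *: K) P.
Proof.
move=> i j.
have := cvg0C_add (cvg0C_cst (P i j)) (cvg0C_mul (@cvg0C_t R) (cvg0C_cst (K i j))).
rewrite mul0r addr0; apply: cvg0C_near.
by near=> t; rewrite !mxE.
Unshelve. all: end_near.
Qed.

Lemma deriv_lem p n (X Yv : 'M[C]_(p,n)) (P K : 'M[C]_n) (F : R -> 'M[C]_(p,n)) D :
  P \in unitmx ->
  (forall t, F t = (X + ((t%:C)%C : C) *: Yv) *m invmx (P + ((t%:C)%C : C) *: K)) ->
  mx_deriv0 F D -> D *m P = Yv - X *m invmx P *m K.
Proof.
move=> uP hF hD.
pose PT := fun t : R => P + ((t%:C)%C : C) *: K.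
pose q := fun t : R => \matrix_(i, j) ((F t i j - F 0 i j) / (t%:C)%C).
have hq : mcvg q D.
  move=> i j; have -> : (fun t => q t i j) = (fun t => (F t i j - F 0 i j) / (t%:C)%C).
    by apply/funext => t; rewrite mxE.
  exact: hD.
have hprod := mcvg_mul hq (mcvg_lin P K).
have hdet : cvg0C (fun t => \det (PT t)) (\det P) := mcvg_det (mcvg_lin P K).
have dP : \det P != 0 by rewrite -unitfE -unitmxE.
have nd := cvg0C_neq0 hdet dP.
have F0 : F 0 = X *m invmx P by rewrite hF c0 !scale0r !addr0.
have ev : \forall t \near (0:R)^', Yv - X *m invmx P *m K = q t *m PT t.
  near=> t.
  have tn0 : t != 0 by near: t; exact: nbhs_dnbhs_neq.
  have ut : PT t \in unitmx.
    by rewrite unitmxE unitfE; near: t; exact: nd.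
  have tC : ((t%:C)%C : C) != 0.
    by apply: contra tn0 => /eqP /(congr1 (@complex.Re R)) /= ->.
  have -> : q t = ((t%:C)%C : C)^-1 *: (F t - F 0).
    by apply/matrixP => i j; rewrite !mxE mulrC.
  rewrite -scalemxAl mulmxBl {1}hF -/(PT t) (mulmxKV ut) F0 /PT mulmxDr (mulmxKV uP).
  rewrite -scalemxAr opprD addrACA subrr add0r -scalerBr scalerA mulVf // scale1r.
  by [].
apply/matrixP => i j.
apply: (cvg0C_uniq (hprod i j)); apply: cvg0C_near (cvg0C_cst _).
by apply: filterS ev => t ->.
Unshelve. all: end_near.
Qed.
End Deriv.
Section Inv.
Variable R : realType.
Local Notation C := (R[i]).
Local Notation cj := (@Defs.conjmx R _ _).
Local Notation cmx := (@Defs.cmx R _ _).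
Local Notation Imx := (@Defs.Immx R _ _).

Lemma ds2E' n m (A B : R) (Z : 'M[C]_n) (W : 'M[C]_(m,n)) dZ dW :
  (invmx (cmx (Imx Z)))^T = invmx (cmx (Imx Z)) -> dZ^T = dZ ->
  ds2 A B Z W dZ dW = Fm A B (invmx (cmx (Imx Z))) dZ (cj dZ)
    (dW - cmx (Imx W) *m invmx (cmx (Imx Z)) *m dZ)
    (cj (dW - cmx (Imx W) *m invmx (cmx (Imx Z)) *m dZ)).
Proof.
move=> sY sdZ; rewrite ds2E //.
by rewrite cjB !cjM cj_inv !cj_cmx.
Qed.

Lemma inv_core n m (A B : R) (Yi Ysi dZ dZ' P : 'M[C]_n) (O Os : 'M[C]_(m,n)) :
  cj P \in unitmx ->
  Ysi = cj P *m Yi *m P^T -> Ysi = P *m Yi *m (cj P)^T ->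
  P^T *m dZ' *m P = dZ -> Os *m P = O ->
  Fm A B Ysi dZ' (cj dZ') Os (cj Os) = Fm A B Yi dZ (cj dZ) O (cj O).
Proof.
move=> uPb e1 e2 hZ hO; rewrite /Fm.
have hZb : (cj P)^T *m cj dZ' *m cj P = cj dZ by rewrite -hZ !cjM cj_tr.
have hOb : cj Os *m cj P = cj O by rewrite -hO cjM.
congr (_ * _ + _ * _).
  rewrite {1}e1 e2.
  have -> : cj P *m Yi *m P^T *m dZ' *m (P *m Yi *m (cj P)^T) *m cj dZ' =
    cj P *m (Yi *m (P^T *m dZ' *m P) *m Yi *m ((cj P)^T *m cj dZ')) by rewrite !mulmxA.
  by rewrite mxtrace_mulC hZ -[_ *m _ *m cj P]mulmxA hZb.
rewrite e1.
have -> : cj P *m Yi *m P^T *m Os^T *m cj Os = cj P *m (Yi *m (Os *m P)^T *m cj Os).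
  by rewrite trmx_mul !mulmxA.
by rewrite mxtrace_mulC hO -!mulmxA hOb.
Qed.
End Inv.
Lemma zAC1 (V : zmodType) (x y z u w : V) : x + y + (z + u) + w = x + z + w + (y + u).
Proof. by rewrite -!addrA; congr (_ + _); rewrite addrCA; congr (_ + _); rewrite addrA addrC. Qed.
Lemma zAC2 (V : zmodType) (x y z u : V) : (x + y - z) - (u + y - z) = x - u.
Proof. by rewrite -[x + y - z]addrA -[u + y - z]addrA opprD addrACA subrr addr0. Qed.
Lemma zAC3 (V : zmodType) (x y z u w : V) : x + y + w - (u + z + w) = (x - u) + (y - z).
Proof. by rewrite opprD addrACA subrr addr0 opprD addrACA. Qed.
Lemma zAC4 (V : zmodType) (x z d : V) : z + d = (x + d) - (x - z).
Proof. by rewrite opprB [RHS]addrC -addrA addKr. Qed.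
Section Main.
Variable R : realType.
Local Notation C := (R[i]).
Local Notation cj := (@Defs.conjmx R _ _).
Local Notation cmx := (@Defs.cmx R _ _).
Local Notation Imx := (@Defs.Immx R _ _).

Lemma invariance n m (A B : R) : GJ_invariant (@ds2 R n m A B).
Proof.
move=> M la mu ka [HSp _] Z W [sZ hY] dZ dW sdZ dZ' dW' hdZ hdW.
have [S1 [S2 S3]] := Sp_rel HSp.
pose a := cmx (ulsubmx M); pose b := cmx (ursubmx M).
pose c := cmx (dlsubmx M); pose d := cmx (drsubmx M).
have S1c : a^T *m c = c^T *m a by rewrite /a /c -!cmx_tr -!cmxM S1.
have S2c : b^T *m d = d^T *m b by rewrite /b /d -!cmx_tr -!cmxM S2.
have S3c : a^T *m d - c^T *m b = 1%:M by rewrite /a /b /c /d -!cmx_tr -!cmxM -cmxB S3 cmx1.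
have cja : cj a = a by apply: cj_cmx.
have cjb : cj b = b by apply: cj_cmx.
have cjc : cj c = c by apply: cj_cmx.
have cjd : cj d = d by apply: cj_cmx.
set Y := cmx (Imx Z).
have hImZ : Z - cj Z = ii R *: Y by apply: ImE.
have sZb : (cj Z)^T = cj Z by rewrite -cj_tr sZ.
pose P := c *m Z + d; pose Q := a *m Z + b.
have cjP : cj P = c *m cj Z + d by rewrite /P cjD cjM cjc cjd.
have cjQ : cj Q = a *m cj Z + b by rewrite /Q cjD cjM cja cjb.
have K1 : P^T *m Q = Q^T *m P.
  by apply/eqP; rewrite -subr_eq0 /P /Q key // subrr.
have K2 : (cj P)^T *m Q - (cj Q)^T *m P = ii R *: Y.
  by rewrite cjP cjQ /P /Q key // hImZ.
have uP : P \in unitmx by apply: P_unit hY K2.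
have uPb : cj P \in unitmx by rewrite cj_unit.
have uPT : P^T \in unitmx by rewrite unitmx_tr.
have uY : Y \in unitmx by rewrite /Y cmx_unit posdef_unit.
set Yi := invmx Y.
have cjY : cj Y = Y by rewrite /Y cj_cmx.
have cjYi : cj Yi = Yi by rewrite /Yi cj_inv cjY.
have sYi : Yi^T = Yi by rewrite /Yi trmx_inv /Y -cmx_tr -Imx_tr sZ.
have hZd : dZ' *m P = a *m dZ - Q *m invmx P *m (c *m dZ).
  apply: (deriv_lem uP _ hdZ) => t.
  by rewrite /actZ -/a -/b -/c -/d !mulmxDr -!scalemxAr /P /Q addrAC [_ + d]addrAC.
pose W1 := W + cmx la *m Z + cmx mu.
have hWd : dW' *m P = (dW + cmx la *m dZ) - W1 *m invmx P *m (c *m dZ).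
  apply: (deriv_lem uP _ hdW) => t.
  rewrite /actW -/c -/d !mulmxDr -!scalemxAr /P /W1 [_ + d]addrAC scalerDr.
  by rewrite zAC1.
set Zs := Q *m invmx P.
have sZs : Zs^T = Zs.
  rewrite /Zs trmx_mul trmx_inv.
  have -> : Q^T = P^T *m Q *m invmx P by rewrite K1 mulmxK.
  by rewrite -!mulmxA mulKmx.
set Ys := cmx (Imx Zs).
have hImZs : Zs - cj Zs = ii R *: Ys by apply: ImE.
have cjZs : cj Zs = cj Q *m invmx (cj P) by rewrite /Zs cjM cj_inv.
have K1b : (cj P)^T *m cj Q = (cj Q)^T *m cj P by rewrite -!cj_tr -!cjM K1.
have HY : (cj P)^T *m Ys *m P = Y.
  apply: (scalerI (ii_neq0 R)).
  rewrite scalemxAl scalemxAr -hImZs mulmxBr mulmxBl cjZs /Zs.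
  rewrite !mulmxA (mulmxKV uP) -[(cj P)^T *m cj Q *m _ *m P]mulmxA.
  by rewrite K1b [_ *m (invmx (cj P) *m P)]mulmxA (mulmxK uPb) K2.
have HYc : P^T *m Ys *m cj P = Y.
  have := congr1 cj HY; rewrite !cjM cj_tr cjK cjY.
  by rewrite /Ys cj_cmx.
set Ysi := invmx Ys.
have cjYsi : cj Ysi = Ysi by rewrite /Ysi cj_inv /Ys cj_cmx.
have sYsi : Ysi^T = Ysi by rewrite /Ysi trmx_inv /Ys -cmx_tr -Imx_tr sZs.
have E1 : Ysi = cj P *m Yi *m P^T.
  apply: inv_uniq; rewrite !mulmxA.
  have -> : Ys *m cj P = invmx P^T *m Y by rewrite -HYc -!mulmxA mulKmx.
  by rewrite -[_ *m Y *m Yi]mulmxA mulmxV // mulmx1 mulVmx.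
have E2 : Ysi = P *m Yi *m (cj P)^T.
  by rewrite -cjYsi E1 !cjM cjYi cjK cj_tr.
have HdZ : P^T *m dZ' *m P = dZ.
  rewrite -mulmxA hZd.
  have -> : a *m dZ - Q *m invmx P *m (c *m dZ) = (a - Q *m invmx P *m c) *m dZ.
    by rewrite mulmxBl !mulmxA.
  rewrite mulmxA mulmxBr.
  have -> : P^T *m (Q *m invmx P *m c) = Q^T *m c by rewrite !mulmxA K1 mulmxK.
  by rewrite keyPa // mul1mx.
have sdZ' : dZ'^T = dZ'.
  have e : dZ' = invmx P^T *m dZ *m invmx P.
    by rewrite -HdZ -!mulmxA mulKmx // mulmxA mulmxK.
  by rewrite e !trmx_mul !trmx_inv trmxK sdZ mulmxA.
set V := cmx (Imx W).
have hImW : W - cj W = ii R *: V by apply: ImE.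
set Ws := W1 *m invmx P in hWd *.
set Vs := cmx (Imx Ws).
have hImWs : Ws - cj Ws = ii R *: Vs by apply: ImE.
have cjWs : cj Ws = cj W1 *m invmx (cj P) by rewrite /Ws cjM cj_inv.
have cjW1 : cj W1 = cj W + cmx la *m cj Z + cmx mu by rewrite /W1 !cjD cjM !cj_cmx.
have hW1 : W1 - cj W1 = ii R *: (V + cmx la *m Y).
  by rewrite cjW1 /W1 zAC3 hImW -mulmxBr hImZ -scalemxAr -scalerDr.
have cjPe : cj P = P - ii R *: (c *m Y).
  by rewrite cjP /P scalemxAr -hImZ mulmxBr -zAC4.
have HVs : Vs *m cj P = V + cmx la *m Y - Ws *m c *m Y.
  apply: (scalerI (ii_neq0 R)).
  rewrite scalemxAl -hImWs mulmxBl cjWs (mulmxKV uPb).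
  rewrite {1}cjPe mulmxBr /Ws (mulmxKV uP) -/Ws.
  by rewrite scalerBr -hW1 -scalemxAr mulmxA addrAC.
have HO : (dW' - Vs *m Ysi *m dZ') *m P = dW - V *m Yi *m dZ.
  rewrite mulmxBl hWd.
  have -> : Vs *m Ysi *m dZ' *m P = (Vs *m cj P) *m Yi *m (P^T *m dZ' *m P).
    by rewrite E1 !mulmxA.
  rewrite HVs HdZ.
  have -> : (V + cmx la *m Y - Ws *m c *m Y) *m Yi *m dZ =
      V *m Yi *m dZ + cmx la *m dZ - Ws *m (c *m dZ).
    by rewrite !mulmxBl !mulmxDl -!mulmxA !(mulKVmx uY).
  by rewrite zAC2.
rewrite /actZ /actW -/a -/b -/c -/d -/P -/Q -/Zs -/W1 -/Ws.
rewrite ds2E' // ds2E' //.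
exact: inv_core uPb E1 E2 HdZ HO.
Qed.
End Main.
Unset Implicit Arguments.

Theorem theorem1p1 (R : realType) (n m : nat) (A B : R) :
  (0 < n)%N -> (0 < m)%N -> 0 < A -> 0 < B ->
  is_riemannian_metric (@ds2 R n m A B) /\ GJ_invariant (@ds2 R n m A B).
Proof.
move=> _ _ hA hB; split; first exact: riem.
exact: invariance.
Qed.
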